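(* For $\varepsilon>0$ let $\alpha(\varepsilon)=\inf_{0<x<\min\{\varepsilon,1\}}(x-x^3)^{-2/3}$, which equals $(\varepsilon-\varepsilon^3)^{-2/3}$ if $\varepsilon\le3^{-1/2}$ and $3\cdot2^{-2/3}=1.8898\ldots$ otherwise. Then for every $\varepsilon>0$, $$\max_{1\le k\le n}\sigma_k^2\le\alpha(\varepsilon)\sup_{0<x\le\varepsilon}\big(xL_n(x)\big)^{2/3}.$$
   Context: $X_1,\dots,X_n$ are independent real random variables with $\mathbb E X_k=0$, $\sigma_k^2=\mathbb E X_k^2<\infty$, normalized so that $\sum_{k=1}^n\sigma_k^2=1$; $L_n(z)=\sum_{k=1}^n\mathbb E X_k^2\mathbf 1(|X_k|\ge z)$ for $z\ge0$. *)

(* Defs.v *)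
From HB Require Import structures.
From mathcomp Require Import all_boot all_order all_algebra.
From mathcomp Require Import all_classical all_reals all_analysis.
Set Implicit Arguments. Unset Strict Implicit. Unset Printing Implicit Defensive.
Import Order.TTheory GRing.Theory Num.Theory.
Local Open Scope classical_set_scope.
Local Open Scope ring_scope.

Definition mutually_independent {d} {T : measurableType d} {R : realType}
  (P : probability T R) (n : nat) (X : 'I_n -> {RV P >-> R}) : Prop :=
  forall (J : {set 'I_n}) (B : 'I_n -> set R),
    (forall i, measurable (B i)) ->
    P (\bigcap_(i in [set` mem J]) (X i @^-1` B i)) =
    (\prod_(i in J) P (X i @^-1` B i))%E.

Definition sigma2 {d} {T : measurableType d} {R : realType}
  (P : probability T R) (Y : T -> R) : R :=
  fine 'E_P[(fun w => Y w ^+ 2)].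

Definition Lind {d} {T : measurableType d} {R : realType}
  (P : probability T R) (n : nat) (X : 'I_n -> {RV P >-> R}) (z : R) : R :=
  \sum_(k < n)
    fine 'E_P[(fun w => X k w ^+ 2 * \1_[set w | z <= `|X k w|] w)].

Definition alpha {R : realType} (eps : R) : R :=
  inf [set (x - x ^+ 3) `^ (- (2 / 3)) | x in `]0, Num.min eps 1[].

(* Main.v *)
Require Import Defs.
From HB Require Import structures.
From mathcomp Require Import all_boot all_order all_algebra.
From mathcomp Require Import all_classical all_reals all_analysis.
From mathcomp Require Import measurable_realfun.
From mathcomp Require Import ring lra.
Import Order.TTheory GRing.Theory Num.Theory.
Local Open Scope classical_set_scope.
Local Open Scope ring_scope.

Section K.
Context (R : realType) (d : measure_display) (T : measurableType d)
  (P : probability T R).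

Lemma key (X : {RV P >-> R}) (x : R) (hx : 0 <= x)
  (h2 : (X : T -> R) \in Lfun P 2%:E) :
  let h := fine 'E_P[(fun w => X w ^+ 2 * \1_[set w | x <= `|X w|] w)] in
  [/\ sigma2 P X - x ^+ 2 <= h, h <= sigma2 P X & 0 <= h].
Proof.
move=> h.
set g := fun w => X w ^+ 2.
set f := fun w => X w ^+ 2 * \1_[set w | x <= `|X w|] w.
have mX : measurable_fun setT (X : T -> R) by exact: measurable_funPT.
have mg : measurable_fun setT g by exact: measurable_funX.
have mS : measurable [set w | x <= `|X w|].
  have := (measurableT_comp (@normr_measurable R setT) mX) measurableT
    _ (measurable_itv `[x, +oo[).
  rewrite setTI; congr measurable; by apply/seteqP; split => w /=; rewrite in_itv /= andbT.
have mf : measurable_fun setT f.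
  apply: (@measurable_funM _ _ _ _ g (\1_[set w | x <= `|X w|])) => //; exact: measurable_indic.
have f0 w : 0 <= f w by rewrite /f mulr_ge0 ?sqr_ge0 ?indic_ge0.
have fg w : f w <= g w.
  rewrite /f /g indicE; case: (_ \in _); rewrite ?mulr1 ?mulr0 ?sqr_ge0//.
have gf w : g w <= f w + x ^+ 2.
  rewrite /f /g indicE; have [H|H] := lerP x `|X w|.
    by rewrite mem_set // mulr1 lerDl sqr_ge0.
  rewrite memNset ?mulr0 ?add0r; last first.
    by move=> /= H'; move: (le_lt_trans H' H); rewrite ltxx.
  rewrite -[X w ^+ 2]real_normK ?num_real //.
  by apply: lerXn2r; rewrite ?nnegrE ?normr_ge0 // ltW.
have gfin : ('E_P[g])%E \is a fin_num.
  rewrite unlock; exact: (integrable_fin_num measurableT (Lfun2_integrable_sqr h2)).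
have Ef0 : (0 <= ('E_P[f])%E)%E by rewrite unlock; apply: integral_ge0 => w _; rewrite lee_fin.
have Efg : (('E_P[f])%E <= ('E_P[g])%E)%E.
  rewrite unlock; apply: ge0_le_integral => //.
  - by move=> w _; rewrite lee_fin.
  - exact/measurable_EFinP.
  - exact/measurable_EFinP.
  - by move=> w _; rewrite lee_fin.
have ffin : ('E_P[f])%E \is a fin_num.
  rewrite fin_numE; apply/andP; split.
    by apply: contraTN Ef0 => /eqP ->.
  by apply: contraTN gfin => /eqP E; move: Efg; rewrite E leye_eq => /eqP ->.
have Egf : (('E_P[g])%E <= ('E_P[f])%E + (x ^+ 2)%:E)%E.
  have Ecst := expectation_cst P (x ^+ 2).
  rewrite -Ecst unlock.
  rewrite -ge0_integralD //.
  - apply: ge0_le_integral => //.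
    + by move=> w _; rewrite lee_fin sqr_ge0.
    + exact/measurable_EFinP.
    + by apply: emeasurable_funD; exact/measurable_EFinP.
    + by move=> w _; rewrite lee_fin.
  - by move=> w _; rewrite lee_fin.
  - exact/measurable_EFinP.
  - by move=> w _; rewrite lee_fin sqr_ge0.
  - by apply/measurable_EFinP; exact: measurable_cst.
split.
- rewrite lerBlDr /h /sigma2 -/g -/f.
  rewrite -lee_fin EFinD !fineK //.
- by rewrite /h /sigma2 -/g -/f; apply: fine_le.
- by rewrite /h; apply: fine_ge0.
Qed.

Lemma max_or (a b : R) : Num.max a b = a \/ Num.max a b = b.
Proof. by rewrite /Num.max; case: ifP; auto. Qed.

Lemma sigma2_ge0 (Y : T -> R) : 0 <= sigma2 P Y.
Proof. by apply: fine_ge0; apply: expectation_ge0 => w; rewrite sqr_ge0. Qed.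
End K.
Arguments key {R d T P}.
Arguments max_or {R}.
Arguments sigma2_ge0 {R d T P}.

Theorem lemma4 (R : realType) (d : measure_display) (T : measurableType d)
  (P : probability T R) (n : nat) (X : 'I_n -> {RV P >-> R})
  (hind : mutually_independent X)
  (hL2 : forall k, (X k : T -> R) \in Lfun P 2%:E)
  (hmean : forall k, ('E_P[X k] = 0)%E)
  (hnorm : \sum_(k < n) sigma2 P (X k) = 1)
  (eps : R) (heps : 0 < eps) :
  \big[Num.max/0]_(k < n) sigma2 P (X k) <=
  alpha eps * sup [set (x * Lind X x) `^ (2 / 3) | x in `]0, eps]].
Proof.
set s := \big[Num.max/0]_(k < n) _.
set E := [set _ | x in _].
have s0 : 0 <= s.
  rewrite /s; apply: (big_ind (fun v => 0 <= v)) => //.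
    by move=> a b ha hb; case: (max_or a b) => ->.
  by move=> k _; exact: sigma2_ge0.
have Lge0 x : 0 <= x -> 0 <= Lind X x.
  by move=> hx; apply: sumr_ge0 => k _; case: (key (X k) x hx (hL2 k)).
have Lle1 x : 0 <= x -> Lind X x <= 1.
  move=> hx; rewrite -hnorm; apply: ler_sum => k _.
  by case: (key (X k) x hx (hL2 k)).
have Eub : has_ubound E.
  exists (eps `^ (2 / 3)) => _ [x hx <-].
  move: hx; rewrite /= in_itv /= => /andP[x0 xe].
  apply: ge0_ler_powR.
  - by rewrite divr_ge0.
  - by rewrite nnegrE mulr_ge0 ?Lge0 // ltW.
  - by rewrite nnegrE ltW.
  - by rewrite -[leRHS]mulr1 ler_pM ?Lge0 ?Lle1 // ltW.
have Ene : E !=set0.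
  by exists ((eps * Lind X eps) `^ (2 / 3)); exists eps => //=; rewrite in_itv /= heps lexx.
have S0 : 0 <= sup E.
  case: Ene => e he; apply: le_trans (ub_le_sup Eub he).
  by case: he => x _ <-; exact: powR_ge0.
set m := Num.min eps 1.
have m0 : 0 < m by rewrite lt_min heps ltr01.
have mle : m <= eps by rewrite ge_min lexx.
have m1 : m <= 1 by rewrite ge_min lexx orbT.
have Ane : [set (x - x ^+ 3) `^ (- (2 / 3)) | x in `]0, m[] !=set0.
  exists (((m / 2) - (m / 2) ^+ 3) `^ (- (2 / 3))); exists (m / 2) => //=.
  by rewrite in_itv /=; apply/andP; split; lra.
have A0 : 0 <= alpha eps.
  rewrite /alpha; apply: lb_le_inf => // _ [x _ <-]; exact: powR_ge0.
have [->|spos] := eqVneq s 0; first by rewrite mulr_ge0.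
have spos' : 0 < s by rewrite lt_neqAle eq_sym spos s0.
have [k sk] : exists k, s = sigma2 P (X k).
  have : s = 0 \/ exists k, s = sigma2 P (X k).
    rewrite /s; apply: (big_ind (fun v => v = 0 \/ exists k, v = sigma2 P (X k))).
    - by left.
    - by move=> a b ha hb; case: (max_or a b) => ->.
    - by move=> k _; right; exists k.
  by case=> // h; move: spos; rewrite h eqxx.
have s1 : s <= 1.
  rewrite -hnorm sk (bigD1 k) //= lerDl; apply: sumr_ge0 => i _; exact: sigma2_ge0.
set t := Num.sqrt s.
have t0 : 0 < t by rewrite sqrtr_gt0.
have t1 : t <= 1 by rewrite -sqrtr1 ler_sqrt.
have ts : t ^+ 2 = s by rewrite sqr_sqrtr.
have main y : 0 < y -> y < m -> s <= (y - y ^+ 3) `^ (- (2 / 3)) * sup E.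
  move=> y0 ym.
  set c := y - y ^+ 3.
  have c0 : 0 < c.
    have y1 : y < 1 by apply: lt_le_trans ym m1.
    rewrite /c; nra.
  set x := y * t.
  have x0 : 0 < x by rewrite mulr_gt0.
  have xe : x <= eps.
    apply: le_trans mle; apply: ltW; apply: le_lt_trans ym.
    by rewrite /x -[leRHS]mulr1 ler_pM // ltW.
  have Lk : s - x ^+ 2 <= Lind X x.
    case: (key (X k) x (ltW x0) (hL2 k)) => h1 _ _.
    rewrite sk; apply: le_trans h1 _.
    rewrite /Lind (bigD1 k) //= lerDl; apply: sumr_ge0 => i _.
    by case: (key (X i) x (ltW x0) (hL2 i)).
  have mge : t ^+ 3 * c <= x * Lind X x.
    have -> : t ^+ 3 * c = x * (s - x ^+ 2) by rewrite -ts /x /c; ring.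
    by rewrite ler_wpM2l // ltW.
  have inE : (x * Lind X x) `^ (2 / 3) <= sup E.
    apply: ub_le_sup => //; exists x => //=; rewrite in_itv /= x0 xe //.
  have pw : s * c `^ (2 / 3) <= (x * Lind X x) `^ (2 / 3).
    apply: le_trans (ge0_ler_powR _ _ _ mge); last first.
    - by rewrite nnegrE mulr_ge0 //; [exact: ltW | exact: Lge0 (ltW x0)].
    - by rewrite nnegrE mulr_ge0 //; [exact: exprn_ge0 (ltW t0) | exact: ltW].
    - by rewrite divr_ge0.
    have t0' : 0 <= t by exact: ltW.
    have c0' : 0 <= c by exact: ltW.
    rewrite powRM ?exprn_ge0 //.
    rewrite -(powR_mulrn 3 (ltW t0)) -powRrM.
    have -> : (3%:R * (2 / 3) : R) = 2%:R by field.
    by rewrite powR_mulrn // ts.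
  rewrite powRN.
  have cp : 0 < c `^ (2 / 3) by rewrite powR_gt0.
  rewrite mulrC ler_pdivlMr //.
  exact: le_trans pw inE.
have [y y0 ym] : exists2 y, 0 < y & y < m by exists (m / 2); lra.
have Spos : 0 < sup E.
  rewrite lt_neqAle S0 andbT; apply/negP => /eqP S0'.
  by move: (main y y0 ym); rewrite -S0' mulr0 leNgt spos'.
rewrite -ler_pdivrMr //; apply: lb_le_inf => // _ [z hz <-].
move: hz; rewrite /= in_itv /= => /andP[z0 zm].
by rewrite ler_pdivrMr // main.
Qed.
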